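(* Let $\mathcal A$ be a weakly amenable Banach algebra such that each closed two-sided ideal $I$ of $\mathcal A$ has a bounded approximate identity $(e_\alpha)_\alpha$ which is quasi-central, i.e. $\lim_\alpha(ae_\alpha-e_\alpha a)=0$ for every $a\in\mathcal A$. Then $\mathcal A$ is ideally amenable.
   Context: For a closed two-sided ideal $I$, $I^*$ is a Banach $\mathcal A$-bimodule with $\langle x,a\cdot f\rangle=\langle xa,f\rangle$, $\langle x,f\cdot a\rangle=\langle ax,f\rangle$. A derivation $D:\mathcal A\to Z$ is a continuous linear map with $D(ab)=a\cdot D(b)+D(a)\cdot b$; it is inner if $D(a)=a\cdot z-z\cdot a$ for some $z\in Z$; $H^1(\mathcal A,Z)=\{0\}$ means every derivation is inner. $\mathcal A$ is weakly amenable if $H^1(\mathcal A,\mathcal A^* )=\{0\}$, and ideally amenable if $H^1(\mathcal A,I^* )=\{0\}$ for every closed two-sided ideal $I$. *)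

(* Defs.v *)
From HB Require Import structures.
From mathcomp Require Import all_boot all_order all_algebra.
From mathcomp Require Import all_classical all_reals.
From mathcomp Require Import topology normedtype.
From mathcomp.real_closed Require Import complex.
Set Implicit Arguments. Unset Strict Implicit. Unset Printing Implicit Defensive.
Import Order.TTheory GRing.Theory Num.Theory.
Import numFieldNormedType.Exports.
Local Open Scope classical_set_scope.
Local Open Scope ring_scope.

Section Defs.
Variables (R : realType).
Local Notation K := (R[i])%C.
Variable (A : completeNormedModType K).
Variable (mul : A -> A -> A).

Definition is_banach_algebra_mul : Prop :=
  [/\ forall a b c : A, mul a (mul b c) = mul (mul a b) c,
      forall (k : K) (a b c : A), mul (k *: a + b) c = k *: mul a c + mul b c,
      forall (k : K) (a b c : A), mul a (k *: b + c) = k *: mul a b + mul a c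
    & forall a b : A, `|mul a b| <= `|a| * `|b| ].

Definition closed_ideal (I : set A) : Prop :=
  [/\ I 0,
      forall (k : K) x y, I x -> I y -> I (k *: x + y),
      closed I,
      forall a x, I x -> I (mul a x)
    & forall a x, I x -> I (mul x a) ].

(* Elements of the dual I^* : functionals f : A -> K whose restriction to I
   is linear and bounded (values off I are irrelevant). *)
Definition dual_elt (I : set A) (f : A -> K) : Prop :=
  (forall (k : K) x y, I x -> I y -> f (k *: x + y) = k * f x + f y) /\
  (exists C : R, forall x, I x -> `|f x| <= (C%:C)%C * `|x|).

(* A (continuous) derivation D : A -> I^* , where <x, a.f> = <xa, f> and
   <x, f.a> = <ax, f>. Equality in I^* means equality on I. *)
Definition derivation_into_dual (I : set A) (D : A -> A -> K) : Prop :=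
  [/\ forall a, dual_elt I (D a),
      forall (k : K) a b x, I x -> D (k *: a + b) x = k * D a x + D b x,
      exists C : R, forall a x, I x -> `|D a x| <= (C%:C)%C * `|a| * `|x|
    & forall a b x, I x -> D (mul a b) x = D b (mul x a) + D a (mul b x) ].

Definition inner_into_dual (I : set A) (D : A -> A -> K) : Prop :=
  exists z : A -> K, dual_elt I z /\
    forall a x, I x -> D a x = z (mul x a) - z (mul a x).

Definition H1_dual_trivial (I : set A) : Prop :=
  forall D, derivation_into_dual I D -> inner_into_dual I D.

Definition weakly_amenable : Prop := H1_dual_trivial setT.

Definition ideally_amenable : Prop :=
  forall I, closed_ideal I -> H1_dual_trivial I.

Definition directed_set (T : Type) (le : T -> T -> Prop) : Prop :=
  [/\ inhabited T, (forall t, le t t),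
      (forall s t u, le s t -> le t u -> le s u)
    & forall s t, exists u, le s u /\ le t u].

Definition net_lim (T : Type) (le : T -> T -> Prop) (u : T -> A) (l : A) : Prop :=
  forall eps : R, 0 < eps -> exists t0, forall t, le t0 t -> `|u t - l| < (eps%:C)%C.

Definition has_quasi_central_bai (I : set A) : Prop :=
  exists (T : Type) (le : T -> T -> Prop) (e : T -> A),
    [/\ directed_set le,
        (forall t, I (e t)),
        (exists M : R, forall t, `|e t| <= (M%:C)%C),
        (forall x, I x -> net_lim le (fun t => mul x (e t)) x /\
                          net_lim le (fun t => mul (e t) x) x)
      & forall a, net_lim le (fun t => mul a (e t) - mul (e t) a) 0 ].

End Defs.

(* Main.v *)
Require Import Defs.
From HB Require Import structures.
From mathcomp Require Import all_boot all_order all_algebra.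
From mathcomp Require Import all_classical all_reals.
From mathcomp Require Import topology normedtype.
From mathcomp.real_closed Require Import complex.
From mathcomp Require Import lra ring.
Import numFieldNormedType.Exports.
Import Order.TTheory GRing.Theory Num.Theory.
Local Open Scope classical_set_scope.
Local Open Scope ring_scope.
Section UL.
Variable R : realType.
Variables (T : Type) (U : set_system T) (UU : UltraFilter U).

Lemma rulim_ex (g : T -> R) (B : R) : (forall t, `|g t| <= B) ->
  exists p : R, forall eps, 0 < eps -> U [set t | `|g t - p| < eps].
Proof.
move=> gB.
have FA : U (g @^-1` `[-B, B]%classic).
  apply: (@filterS _ U _ setT); last exact: filterT.
  by move=> t _ /=; rewrite in_itv /= -ler_norml gB.
have [p [_ clp]] := segment_compact (fmap_proper_filter g (@ultra_proper _ _ UU)) FA.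
exists p => eps eps0.
have [//|Uc] := in_ultra_setVsetC [set t | `|g t - p| < eps] UU.
exfalso.
have Nb : nbhs p [set y | `|y - p| < eps].
  apply/nbhs_ballP; exists eps => //= y; rewrite /ball /= distrC.
  done.
have [y [/= hy1 hy2]] := clp [set y | ~ (`|y - p| < eps)] _ Uc Nb.
exact: hy1.
Qed.
Local Notation C := (R[i])%type.
Lemma ger0_real (z : C) : 0 <= z -> z = (complex.Re z)%:C%C.
Proof. case: z => a b; rewrite lecE /= => /andP[/eqP -> _]. by []. Qed.
Definition nr (x : C) : R := complex.Re `|x|.
Lemma normC_real (x : C) : `|x| = (nr x)%:C%C.
Proof. exact: ger0_real. Qed.
Lemma nr_ge0 x : 0 <= nr x.
Proof. have := normr_ge0 x; rewrite normC_real. by rewrite -[0]/(0%:C)%C lecR. Qed.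
Lemma nrD x y : nr (x + y) <= nr x + nr y.
Proof. by rewrite -lecR rmorphD -!normC_real ler_normD. Qed.
Lemma nrM x y : nr (x * y) = nr x * nr y.
Proof. by apply: complexI; rewrite rmorphM -!normC_real normrM. Qed.
Lemma nrN x : nr (- x) = nr x.
Proof. by rewrite /nr normrN. Qed.
Lemma nrB x y : nr (x - y) = nr (y - x).
Proof. by rewrite /nr distrC. Qed.
Lemma nr_eq0 x : (nr x = 0) -> x = 0.
Proof. move=> h; apply/eqP; rewrite -normr_eq0 normC_real h. by apply/eqP. Qed.
Lemma nr_sqrt (z : C) : nr z = Num.sqrt ((complex.Re z)^+2 + (complex.Im z)^+2).
Proof. by rewrite /nr normc_def. Qed.
Lemma nr_le (a b : R) : nr (a +i* b)%C <= `|a| + `|b|.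
Proof.
rewrite nr_sqrt /= -(ger0_norm (addr_ge0 (normr_ge0 a) (normr_ge0 b))) -sqrtr_sqr.
rewrite ler_wsqrtr // sqrrD !real_normK ?num_real //.
have : 0 <= `|a| * `|b| * 2 by rewrite !mulr_ge0.
lra.
Qed.
Lemma Re_le (z : C) : `|complex.Re z| <= nr z.
Proof.
rewrite nr_sqrt -sqrtr_sqr ler_wsqrtr // lerDl sqr_ge0 //.
Qed.
Lemma Im_le (z : C) : `|complex.Im z| <= nr z.
Proof.
rewrite nr_sqrt -sqrtr_sqr ler_wsqrtr // lerDr sqr_ge0 //.
Qed.
Definition ulim (g : T -> C) (p : C) :=
  forall eps : R, 0 < eps -> U [set t | nr (g t - p) < eps].

Lemma ulim_unique g p q : ulim g p -> ulim g q -> p = q.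
Proof.
move=> hp hq; apply/eqP; rewrite -subr_eq0; apply/eqP/nr_eq0.
case: (ltrP 0 (nr (p - q))) => h; last by apply/eqP; rewrite eq_le h nr_ge0.
exfalso; set d := nr (p - q) / 2.
have d0 : 0 < d by rewrite divr_gt0.
have [t [/= h1 h2]] := @filter_ex _ U _ _ (filterI (hp d d0) (hq d d0)).
have e : p - q = (g t - q) + - (g t - p) by ring.
have := nrD (g t - q) (- (g t - p)); rewrite -e nrN.
rewrite /d in h1 h2 *; lra.
Qed.

Lemma ulim_lin (k : C) g h p q : ulim g p -> ulim h q ->
  ulim (fun t => k * g t + h t) (k * p + q).
Proof.
move=> hp hq eps e0.
set r := nr k.
have r0 : 0 <= r := nr_ge0 k.
set d := eps / (2 * (r + 1)).
have d0 : 0 < d by rewrite divr_gt0 // mulr_gt0 // ltr_wpDl.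
have hd : (r + 1) * d = eps / 2.
  rewrite /d; field.
  exact: (lt0r_neq0 (ltr_wpDl r0 ltr01)).
apply: filterS (filterI (hp d d0) (hq d d0)) => t [/= h1 h2].
have e : k * g t + h t - (k * p + q) = k * (g t - p) + (h t - q) by ring.
rewrite e; apply: (le_lt_trans (nrD _ _)); rewrite nrM -/r.
have : r * nr (g t - p) <= r * d by rewrite ler_wpM2l // ltW.
nra.
Qed.

Lemma ulim_bound g p b : ulim g p -> (forall t, nr (g t) <= b) -> nr p <= b.
Proof.
move=> hp hb; case: (lerP (nr p) b) => // h; exfalso.
have d0 : 0 < nr p - b by rewrite subr_gt0.
have [t /= ht] := @filter_ex _ U _ _ (hp _ d0).
have e : p = g t + - (g t - p) by ring.
have := nrD (g t) (- (g t - p)); rewrite -e nrN.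
have := hb t; lra.
Qed.

Lemma ulim_ex g b : (forall t, nr (g t) <= b) -> exists p, ulim g p.
Proof.
move=> hb.
have [pr hr] := @rulim_ex (fun t => complex.Re (g t)) b (fun t => le_trans (Re_le _) (hb t)).
have [pi hi] := @rulim_ex (fun t => complex.Im (g t)) b (fun t => le_trans (Im_le _) (hb t)).
exists (pr +i* pi)%C => eps e0.
have e2 : 0 < eps / 2 by rewrite divr_gt0.
apply: filterS (filterI (hr _ e2) (hi _ e2)) => t [/= h1 h2].
move: h1 h2; case: (g t) => a c /= h1 h2.
have -> : ((a +i* c) - (pr +i* pi) = (a - pr) +i* (c - pi))%C by [].
apply: le_lt_trans (nr_le _ _) _; lra.
Qed.
End UL.

Arguments nr {R}.
Arguments ulim {R T} U g p.
Arguments ulim_unique {R T U UU} g p q.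
Arguments ulim_lin {R T U UU} k g h p q.
Arguments ulim_bound {R T U UU} g p b.
Arguments ulim_ex {R T U UU} g b.
Lemma small_mul (R : realType) (K0 eps : R) : 0 <= K0 -> 0 < eps ->
  exists2 d : R, 0 < d & forall w, 0 <= w -> w < d -> K0 * w < eps.
Proof.
move=> K00 e0; exists (eps / (K0 + 1)).
  by rewrite divr_gt0 // ltr_wpDl.
move=> w w0 wd.
have hd : (K0 + 1) * (eps / (K0 + 1)) = eps.
  by field; exact: (lt0r_neq0 (ltr_wpDl K00 ltr01)).
have : K0 * w <= K0 * (eps / (K0 + 1)) by rewrite ler_wpM2l // ltW.
have : 0 < eps / (K0 + 1) by rewrite divr_gt0 // ltr_wpDl.
lra.
Qed.

Theorem corollary3p5 (R : realType) (A : completeNormedModType (R[i])%C)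
  (mul : A -> A -> A) :
  is_banach_algebra_mul mul ->
  weakly_amenable mul ->
  (forall I : set A, closed_ideal mul I -> has_quasi_central_bai mul I) ->
  ideally_amenable mul.
Proof.
move=> [hassoc hlinL hlinR hsub] hWA hQ I hI D hD.
have [I0 Ilin Icl IL IR] := hI.
have [T [le [e [dir eI [M hM] bai qc]]]] := hQ I hI.
have [[t0] lerefl letrans ledir] := dir.
pose N := fun S : set T => exists t1, forall t, le t1 t -> S t.
have NF : ProperFilter N.
  apply: Build_ProperFilter_ex.
    by move=> P [t1 h]; exists t1; exact: h _ (lerefl t1).
  constructor.
  - by exists t0.
  - move=> P Q [t1 h1] [t2 h2].
    have [u [hu1 hu2]] := ledir t1 t2.
    by exists u => t hut; split; [apply: h1 | apply: h2]; apply: letrans hut.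
  - by move=> P Q PQ [t1 h1]; exists t1 => t ht; apply: PQ; apply: h1.
have [U [UU NU]] := ultraFilterLemma NF.
pose nA (a : A) : R := complex.Re `|a|.
have normA_real : forall a : A, `|a| = (nA a)%:C%C.
  by move=> a; apply: ger0_real.
have nA_ge0 : forall a, 0 <= nA a.
  by move=> a; have := normr_ge0 a; rewrite normA_real -[0]/(0%:C)%C lecR.
have nAN : forall a, nA (- a) = nA a by move=> a; rewrite /nA normrN.
have hsubR : forall a b, nA (mul a b) <= nA a * nA b.
  by move=> a b; have := hsub a b; rewrite !normA_real -rmorphM lecR.
have [hDdual hDlin [CD hDC] hDleib] := hD.
pose C' := Num.max CD 0.
have C'0 : 0 <= C' by rewrite le_max lexx orbT.
have hDC' : forall a x, I x -> nr (D a x) <= C' * nA a * nA x.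
  move=> a x xI; have := hDC a x xI.
  rewrite normC_real !normA_real -!rmorphM lecR => h.
  apply: le_trans h _; rewrite -!mulrA ler_wpM2r ?mulr_ge0 //.
  by rewrite le_max lexx.
pose M' := Num.max M 0.
have hM' : forall t, nA (e t) <= M'.
  move=> t; have := hM t; rewrite normA_real lecR => h.
  by apply: le_trans h _; rewrite le_max lexx.
have M'0 : 0 <= M' by rewrite le_max lexx orbT.
have gB : forall a y t, nr (D a (mul y (e t))) <= C' * nA a * M' * nA y.
  move=> a y t.
  apply: le_trans (hDC' a _ (IL y _ (eI t))) _.
  have h1 := hsubR y (e t).
  have h2 : nA y * nA (e t) <= nA y * M' by rewrite ler_wpM2l.
  have h3 : C' * nA a * nA (mul y (e t)) <= C' * nA a * (nA y * M').
    by rewrite ler_wpM2l ?mulr_ge0 //; apply: le_trans h1 h2.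
  apply: le_trans h3 _; rewrite le_eqVlt; apply/orP; left; apply/eqP; ring.
pose D' a y := xget 0 (ulim U (fun t => D a (mul y (e t)))).
have D'P : forall a y, ulim U (fun t => D a (mul y (e t))) (D' a y).
  move=> a y; apply: xgetPex; exact: (@ulim_ex R T U UU _ _ (gB a y)).
have netU : forall g p, (forall eps : R, 0 < eps -> exists t1, forall t, le t1 t ->
    nr (g t - p) < eps) -> ulim U g p.
  by move=> g p h eps e0; apply: NU; apply: h.
have DaL : forall a k x y, I x -> I y -> D a (k *: x + y) = k * D a x + D a y.
  by move=> a k x y xI yI; have [hl _] := hDdual a; apply: hl.
have DaB : forall a x y, I x -> I y -> D a (x - y) = D a x - D a y.
  move=> a x y xI yI.
  have -> : x - y = (-1) *: y + x by rewrite scaleN1r addrC.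
  by rewrite DaL // mulN1r addrC.
have IB : forall x y, I x -> I y -> I (x - y).
  move=> x y xI yI; have -> : x - y = (-1) *: y + x by rewrite scaleN1r addrC.
  exact: Ilin.
have mulBr : forall a b c, mul a (b - c) = mul a b - mul a c.
  move=> a b c; have -> : b - c = (-1) *: c + b by rewrite scaleN1r addrC.
  by rewrite hlinR scaleN1r addrC.
have ulim1 : forall (g h : T -> R[i]) (p q : R[i]), ulim U g p -> ulim U h q ->
    ulim U (fun t => g t + h t) (p + q).
  move=> g h p q hp hq; have := @ulim_lin R T U UU 1 g h p q hp hq.
  have -> : (fun t => 1 * g t + h t) = (fun t => g t + h t).
    by apply: funext => t; rewrite mul1r.
  by rewrite mul1r.
have uniq := @ulim_unique R T U UU.
have linr := @ulim_lin R T U UU.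
have bnd := @ulim_bound R T U UU.
have hD' : derivation_into_dual mul setT D'.
  split.
  - move=> a; split.
      move=> k x y _ _.
      have := linr k _ _ _ _ (D'P a x) (D'P a y).
      have -> : (fun t => k * D a (mul x (e t)) + D a (mul y (e t))) =
                (fun t => D a (mul (k *: x + y) (e t))).
        by apply: funext => t; rewrite hlinL DaL //; apply: IL.
      by move=> h; apply: uniq (D'P a _) h.
    exists (C' * nA a * M') => x _.
    rewrite normC_real normA_real -rmorphM lecR.
    by apply: bnd (D'P a x) _ => t; apply: gB.
  - move=> k a b x _.
    have := linr k _ _ _ _ (D'P a x) (D'P b x).
    have -> : (fun t => k * D a (mul x (e t)) + D b (mul x (e t))) =
              (fun t => D (k *: a + b) (mul x (e t))).
      by apply: funext => t; rewrite hDlin //; apply: IL.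
    by move=> h; apply: uniq (D'P _ _) h.
  - exists (C' * M') => a x _.
    rewrite normC_real !normA_real -!rmorphM lecR.
    apply: bnd (D'P a x) _ => t; apply: le_trans (gB a x t) _.
    rewrite le_eqVlt; apply/orP; left; apply/eqP; ring.
  - move=> a b x _.
    pose g1 := fun t => D b (mul (mul x (e t)) a).
    pose g1' := fun t => D b (mul (mul x a) (e t)).
    have h0 : ulim U (fun t => g1 t - g1' t) 0.
      apply: netU => eps e0.
      have [d d0 hd] := @small_mul R _ _ (mulr_ge0 (mulr_ge0 C'0 (nA_ge0 b)) (nA_ge0 x)) e0.
      have [t1 ht1] := qc a d d0.
      exists t1 => t /ht1; rewrite normA_real ltcR subr0 => hw.
      rewrite subr0 /g1 /g1'.
      have eI1 : I (mul (mul x (e t)) a) by apply: IR; apply: IL.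
      have eI2 : I (mul (mul x a) (e t)) by apply: IL.
      have wI : I (mul (e t) a - mul a (e t)) by apply: IB; [apply: IR | apply: IL].
      rewrite -DaB // -!hassoc -mulBr.
      apply: le_lt_trans (hDC' b _ (IL _ _ wI)) _.
      have hs := hsubR x (mul (e t) a - mul a (e t)).
      have hw' : nA (mul (e t) a - mul a (e t)) < d by rewrite -nAN opprB.
      have := hd _ (nA_ge0 _) hw'.
      have : C' * nA b * nA (mul x (mul (e t) a - mul a (e t))) <=
             C' * nA b * (nA x * nA (mul (e t) a - mul a (e t))).
        by rewrite ler_wpM2l ?mulr_ge0.
      lra.
    have hg1 : ulim U g1 (0 + D' b (mul x a)).
      have := ulim1 _ _ _ _ h0 (D'P b (mul x a)).
      have -> : (fun t => g1 t - g1' t + D b (mul (mul x a) (e t))) = g1.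
        by apply: funext => t; rewrite subrK.
      done.
    have := ulim1 _ _ _ _ hg1 (D'P a (mul b x)).
    rewrite add0r.
    have -> : (fun t => g1 t + D a (mul (mul b x) (e t))) =
              (fun t => D (mul a b) (mul x (e t))).
      apply: funext => t; rewrite hDleib; last by apply: IL.
      by rewrite /g1 hassoc.
    by move=> h; apply: uniq (D'P _ _) h.
have [z [zd hz]] := hWA D' hD'.
exists z; split.
  case: zd => zl [Cz hCz]; split; first by move=> k x y _ _; apply: zl.
  by exists Cz => x _; apply: hCz.
move=> a x xI; rewrite -hz //.
symmetry; apply: uniq (D'P a x) _.
apply: netU => eps e0.
have [d d0 hd] := @small_mul R _ _ (mulr_ge0 C'0 (nA_ge0 a)) e0.
have [t1 ht1] := (bai x xI).1 d d0.
exists t1 => t /ht1; rewrite normA_real ltcR => hw.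
rewrite -DaB //; last by apply: IL.
apply: le_lt_trans (hDC' a _ (IB _ _ (IL _ _ (eI t)) xI)) _.
exact: hd (nA_ge0 _) hw.
Qed.
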